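(* Let $\mathbf n\ge 2$, let $A'=\mathbb C^{2\mathbf n-1}$ with basis $e_1,\dots,e_{2\mathbf n-1}$, and let $U,V\cong\mathbb C^{\mathbf n}$ with bases $u_1,\dots,u_{\mathbf n}$ and $v_1,\dots,v_{\mathbf n}$. Define the linear map $\psi:\Lambda^{\mathbf n-1}A'\otimes V\to\Lambda^{\mathbf n}A'\otimes U$ by $$\psi(e_S\otimes v_k)=\sum_{\substack{1\le m\le\mathbf n\\ (m,k)\ne(\mathbf n,1)}} e_{m+k-1}\wedge e_S\otimes u_m,$$ where for $S=\{s_1<\dots<s_{\mathbf n-1}\}\subset\{1,\dots,2\mathbf n-1\}$, $e_S=e_{s_1}\wedge\cdots\wedge e_{s_{\mathbf n-1}}$. Then $\operatorname{rank}\psi=\mathbf n\binom{2\mathbf n-1}{\mathbf n}-1$; more precisely, the image of $\psi$ is the span of all basis vectors $e_P\otimes u_l$ ($P\subset\{1,\dots,2\mathbf n-1\}$, $|P|=\mathbf n$, $1\le l\le\mathbf n$) other than $e_{\{1,\dots,\mathbf n\}}\otimes u_{\mathbf n}$.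
   Context: This map is the Koszul flattening $\Lambda^{\mathbf n-1}A'\otimes V\to\Lambda^{\mathbf n}A'\otimes U$ of the reduced tensor $M^{red}_{\langle 1,1,\mathbf n\rangle}$ restricted via the linear map $x^i_j\mapsto e_{i+j-1}$. *)

(* Defs.v *)
From HB Require Import structures.
From mathcomp Require Import all_boot all_order all_algebra all_field.
Set Implicit Arguments. Unset Strict Implicit. Unset Printing Implicit Defensive.
Import Order.TTheory GRing.Theory Num.Theory.
Local Open Scope ring_scope.

(* Indices are 0-based: e_1..e_{2n-1} ~ 'I_(2n-1), u_1..u_n, v_1..v_n ~ 'I_n. *)

(* basis of Lambda^{n-1} A' (x) V : pairs (S, k), S an (n-1)-subset, k : 'I_n *)
Definition dom_idx (n : nat) : finType :=
  ({S : {set 'I_(2 * n - 1)} | #|S| == n.-1} * 'I_n)%type.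

(* basis of Lambda^{n} A' (x) U : pairs (P, l), P an n-subset, l : 'I_n *)
Definition cod_idx (n : nat) : finType :=
  ({P : {set 'I_(2 * n - 1)} | #|P| == n} * 'I_n)%type.

(* coefficient of e_P (x) u_l in psi(e_S (x) v_k):
   only the term m = l contributes, with wedge factor e_{m+k-1} /\ e_S
   (1-based) = e_{l+k} /\ e_S (0-based), which equals
   (-1)^{#{s in S | s < l+k}} e_{S u {l+k}} if l+k not in S, and 0 otherwise;
   the term (m,k) = (n,1) (0-based (n-1,0)) is excluded. *)
Definition psi_coef (n : nat) (S : {set 'I_(2 * n - 1)}) (k : 'I_n)
    (P : {set 'I_(2 * n - 1)}) (l : 'I_n) : algC :=
  if ((val l, val k) != (n.-1, 0%N)) &&
     [exists j : 'I_(2 * n - 1),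
        [&& val j == (val l + val k)%N, j \notin S & P == j |: S]]
  then (-1) ^+ #|[set s in S | (val s < val l + val k)%N]|
  else 0.

(* matrix of psi in the bases above (row-vector convention: row (S,k) is the
   coordinate vector of psi(e_S (x) v_k)). *)
Definition psi_mx (n : nat) : 'M[algC]_(#|dom_idx n|, #|cod_idx n|) :=
  \matrix_(i, j)
    let: (Sx, k) := enum_val i in
    let: (Px, l) := enum_val j in psi_coef (val Sx) k (val Px) l.

(* the exceptional basis vector e_{1..n} (x) u_n *)
Definition is_exceptional (n : nat) (j : 'I_#|cod_idx n|) : bool :=
  let: (Px, l) := enum_val j in
  (val Px == [set i : 'I_(2 * n - 1) | (val i < n)%N]) && (val l == n.-1).

Definition span_nonexc (n : nat) : 'M[algC]_(#|cod_idx n|) :=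
  (\sum_(j | ~~ is_exceptional j) <<(delta_mx 0 j : 'rV[algC]_(#|cod_idx n|))>>)%MS.

(* Main.v *)
Require Import Defs.
From HB Require Import structures.
From mathcomp Require Import all_boot all_order all_algebra all_field.
From mathcomp Require Import zify.
Import Order.TTheory GRing.Theory Num.Theory.
Local Open Scope ring_scope.
Set Implicit Arguments. Unset Strict Implicit. Unset Printing Implicit Defensive.

Lemma supp_sub (F : fieldType) m p (v : 'rV[F]_m) (V : 'M[F]_(p, m)) :
  (forall j, v 0 j != 0 -> ((delta_mx 0 j : 'rV[F]_m) <= V)%MS) -> (v <= V)%MS.
Proof.
move=> H; rewrite [v]row_sum_delta; apply: summx_sub => j _.
have [->|/H] := eqVneq (v 0 j) 0; first by rewrite scale0r sub0mx.
exact: scalemx_sub.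
Qed.

Lemma pivot_sub (F : fieldType) m p (v : 'rV[F]_m) (V : 'M[F]_(p, m)) t :
  (v <= V)%MS -> v 0 t != 0 ->
  (forall j, j != t -> v 0 j != 0 -> ((delta_mx 0 j : 'rV[F]_m) <= V)%MS) ->
  ((delta_mx 0 t : 'rV[F]_m) <= V)%MS.
Proof.
move=> vV vt H.
have e : v 0 t *: (delta_mx 0 t : 'rV[F]_m) = v - \sum_(j | j != t) v 0 j *: (delta_mx 0 j : 'rV[F]_m).
  by rewrite [v in v - _]row_sum_delta (bigD1 t) //= addrK.
have : (v 0 t *: (delta_mx 0 t : 'rV[F]_m) <= V)%MS.
  rewrite e addmx_sub // -scaleN1r scalemx_sub // summx_sub // => j jt.
  have [->|/H] := eqVneq (v 0 j) 0; first by rewrite scale0r sub0mx.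
  by move=> /(_ jt); apply: scalemx_sub.
by move/(scalemx_sub (v 0 t)^-1); rewrite scalerA mulVf // scale1r.
Qed.
Unset Implicit Arguments.
Definition lo n (o : nat) : {set 'I_(2 * n - 1)} := [set x : 'I_(2 * n - 1) | (x < o)%N].
Definition tP n (j : 'I_#|cod_idx n|) : {set 'I_(2 * n - 1)} := val (enum_val j).1.
Definition tl n (j : 'I_#|cod_idx n|) : nat := nat_of_ord (enum_val j).2.
Definition sS n (i : 'I_#|dom_idx n|) : {set 'I_(2 * n - 1)} := val (enum_val i).1.
Definition sk n (i : 'I_#|dom_idx n|) : nat := nat_of_ord (enum_val i).2.

Definition Psi n r0 (i : 'I_#|dom_idx n|) : 'rV[algC]_#|cod_idx n| :=
  \row_j (if (r0 <= tl n j)%N then psi_mx n i j else 0).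
Definition srcOK n o (Z : {set 'I_(2 * n - 1)}) c0 (i : 'I_#|dom_idx n|) :=
  (sS n i :&: lo n o == Z) && (c0 <= sk n i)%N.
Definition VV n r0 c0 (Z : {set 'I_(2 * n - 1)}) : 'M[algC]_#|cod_idx n| :=
  (\sum_(i | srcOK n (r0 + c0) Z c0 i) <<Psi n r0 i>>)%MS.

Set Implicit Arguments.

Lemma psi_mxE n i j : psi_mx n i j =
  psi_coef (val (enum_val i).1) (enum_val i).2 (val (enum_val j).1) (enum_val j).2.
Proof. by rewrite mxE; case: (enum_val i) => ? ?; case: (enum_val j). Qed.

Lemma VV_gen n r0 c0 (Z : {set 'I_(2 * n - 1)}) i : srcOK n (r0 + c0) Z c0 i -> (Psi n r0 i <= VV n r0 c0 Z)%MS.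
Proof. by move=> h; apply: (sumsmx_sup i) => //; rewrite genmxE. Qed.

Lemma in_lo n o x : (x \in lo n o) = (x < o)%N.
Proof. by rewrite inE. Qed.

Lemma VV_mono n r0 c0 (Z : {set 'I_(2 * n - 1)}) : Z \subset lo n (r0 + c0) ->
  (VV n r0 c0.+1 Z <= VV n r0 c0 Z)%MS.
Proof.
move=> sZ; apply/sumsmx_subP => i; rewrite /srcOK => /andP[/eqP hZ hk].
rewrite genmxE; apply: VV_gen; rewrite /srcOK (ltnW hk) andbT; apply/eqP.
rewrite -hZ; apply/setP => x; rewrite !inE.
case hx: (x \in sS n i) => //=.
have [h|h] := ltnP x (r0 + c0).
  by rewrite addnS ltnS ltnW.
apply/esym/negbTE/negP => h2.
have : x \in Z by rewrite -hZ !inE hx.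
by move/(subsetP sZ); rewrite in_lo ltnNge h.
Qed.

Lemma psi_coef_nz n (S : {set 'I_(2 * n - 1)}) (k : 'I_n) (P : {set 'I_(2 * n - 1)}) (l : 'I_n) : psi_coef S k P l != 0 ->
  ((l : nat), (k : nat)) != (n.-1, 0%N) /\
  exists m : 'I_(2 * n - 1), [/\ (m : nat) = (l + k)%N, m \notin S & P = m |: S].
Proof.
rewrite /psi_coef; case: ifP => [/andP[h /existsP[m /and3P[/eqP h1 h2 /eqP h3]]] _|];
  last by rewrite eqxx.
by split => //; exists m.
Qed.

Lemma psi_coef_neq0 n (S : {set 'I_(2 * n - 1)}) (k : 'I_n) (P : {set 'I_(2 * n - 1)}) (l : 'I_n) (m : 'I_(2 * n - 1)) :
  ((l : nat), (k : nat)) != (n.-1, 0%N) -> m \notin S -> (m : nat) = (l + k)%N ->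
  P = m |: S -> psi_coef S k P l != 0.
Proof.
move=> h1 h2 h3 h4; rewrite /psi_coef ifT; first by rewrite expf_neq0 // oppr_eq0 oner_eq0.
apply/andP; split => //; apply/existsP; exists m; apply/and3P; split => //.
  by apply/eqP.
by apply/eqP.
Qed.

Lemma PsiE n r0 i j : Psi n r0 i 0 j =
  if (r0 <= tl n j)%N then psi_coef (sS n i) (enum_val i).2 (tP n j) (enum_val j).2 else 0.
Proof. by rewrite mxE psi_mxE. Qed.

Lemma setL0 n o (x : 'I_(2 * n - 1)) (Z : {set 'I_(2 * n - 1)}) :
  (x : nat) = o -> Z \subset lo n o -> (x |: Z) :&: lo n o = Z.
Proof.
move=> hx sZ; apply/setP => y; rewrite !inE.
case hy: (y \in Z).
  by move/subsetP: sZ => /(_ y hy); rewrite in_lo => ->; rewrite orbT.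
rewrite orbF; apply/negbTE; apply/negP => /andP[/eqP -> ]; by rewrite hx ltnn.
Qed.

Lemma setLA n o (Y Z : {set 'I_(2 * n - 1)}) :
  Y :&: lo n o.+1 = Z -> Y :&: lo n o = Z :&: lo n o.
Proof.
move=> <-; apply/setP => y; rewrite !inE; case: (y \in Y) => //=.
by case h: (y < o)%N; rewrite /= ?andbT ?andbF // ltnS (ltnW h).
Qed.

Lemma setLB n o (m : 'I_(2 * n - 1)) (Y : {set 'I_(2 * n - 1)}) :
  (o <= m)%N -> (m |: Y) :&: lo n o = Y :&: lo n o.
Proof.
move=> hm; apply/setP => y; rewrite !inE.
case: (eqVneq y m) => [->|] //=; by rewrite ltnNge hm andbF.
Qed.

Lemma setL1 n o (x m : 'I_(2 * n - 1)) (X : {set 'I_(2 * n - 1)}) :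
  (x : nat) = o -> (o < m)%N -> (m |: (X :\ x)) :&: lo n o.+1 = X :&: lo n o.
Proof.
move=> hx hm; apply/setP => y; rewrite !inE.
case: (eqVneq y m) => [->|ym] /=; first by rewrite ltnS leqNgt hm /= ltnNge (ltnW hm) andbF.
case: (eqVneq y x) => [->|yx] /=; first by rewrite hx ltnn andbF.
case: (y \in X) => //=; rewrite ltnS leq_eqVlt; case: ltnP => _; rewrite ?orbT ?orbF //.
by apply/negbTE; rewrite -hx val_eqE.
Qed.

Lemma setL2 n o (x : 'I_(2 * n - 1)) (X : {set 'I_(2 * n - 1)}) :
  x \in X -> (x : nat) = o -> X :&: lo n o.+1 = x |: (X :&: lo n o).
Proof.
move=> xX hx; apply/setP => y; rewrite !inE.
case: (eqVneq y x) => [->|yx] /=; first by rewrite xX hx ltnSn.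
rewrite ltnS leq_eqVlt; case: ltnP => _; rewrite ?orbT ?orbF ?andbT ?andbF //.
by rewrite -hx val_eqE (negbTE yx) andbF.
Qed.

Lemma setL3 n o (x : 'I_(2 * n - 1)) (X : {set 'I_(2 * n - 1)}) :
  (x : nat) = o -> (X :\ x) :&: lo n o = X :&: lo n o.
Proof.
move=> hx; apply/setP => y; rewrite !inE.
case: (eqVneq y x) => [->|yx] //=; by rewrite hx ltnn !andbF.
Qed.

Lemma setL4 n o (X : {set 'I_(2 * n - 1)}) :
  ~~ [exists x in X, (x : nat) == o] -> X :&: lo n o.+1 = X :&: lo n o.
Proof.
move=> hno; apply/setP => y; rewrite !inE.
case yX: (y \in X) => //=; rewrite ltnS leq_eqVlt; case: (eqVneq (y : nat) o) => //= hy.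
by move/negP: hno; case; apply/existsP; exists y; rewrite yX hy eqxx.
Qed.

Lemma card_lo n o : (o <= 2 * n - 1)%N -> #|lo n o| = o.
Proof.
move=> ho.
have -> : lo n o = [set widen_ord ho y | y : 'I_o].
  apply/setP => x; rewrite in_lo; apply/idP/imsetP => [hx|[y _ ->]] //=.
  by exists (Ordinal hx) => //; apply/val_inj.
rewrite card_imset ?cardsT ?card_ord // => a b /(congr1 val) /= h; exact: val_inj.
Qed.

Lemma card_hi n o (X : {set 'I_(2 * n - 1)}) : (o <= 2 * n - 1)%N ->
  (#|X :\: lo n o| <= 2 * n - 1 - o)%N.
Proof.
move=> ho.
apply: leq_trans (subset_leq_card (_ : X :\: lo n o \subset ~: lo n o)) _.
  by apply/subsetP => y; rewrite !inE => /andP[].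
by rewrite cardsCs setCK card_ord (@card_lo n o ho).
Qed.

Lemma psi_nz n i j : psi_mx n i j != 0 ->
  ((tl n j, sk n i) != (n.-1, 0%N)) /\
  exists m : 'I_(2 * n - 1), [/\ (m : nat) = (tl n j + sk n i)%N, m \notin sS n i & tP n j = m |: sS n i].
Proof. rewrite psi_mxE; exact: psi_coef_nz. Qed.

Lemma Psi_sub n a b i j : (Psi n a i - Psi n b i) 0 j =
  (if (a <= tl n j)%N then psi_mx n i j else 0) - (if (b <= tl n j)%N then psi_mx n i j else 0).
Proof. by rewrite !mxE. Qed.

Lemma VV_down n r0 c0 (Z : {set 'I_(2 * n - 1)}) (x : 'I_(2 * n - 1)) :
  (x : nat) = (r0 + c0)%N -> Z \subset lo n (r0 + c0) ->
  (forall j, tl n j = r0 -> tP n j :&: lo n (r0 + c0) = Z ->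
     ((delta_mx 0 j : 'rV[algC]_#|cod_idx n|) <= VV n r0 c0 Z)%MS) ->
  (VV n r0.+1 c0 (x |: Z) <= VV n r0 c0 Z)%MS.
Proof.
move=> hx sZ H; apply/sumsmx_subP => i; rewrite /srcOK => /andP[/eqP hY hk].
rewrite genmxE; rewrite addSn in hY.
have hY0 : sS n i :&: lo n (r0 + c0) = Z by rewrite (setLA hY) setL0.
have g : (Psi n r0 i <= VV n r0 c0 Z)%MS.
  by apply: VV_gen; rewrite /srcOK hY0 eqxx hk.
have -> : Psi n r0.+1 i = Psi n r0 i + (Psi n r0.+1 i - Psi n r0 i).
  by rewrite addrC subrK.
rewrite addmx_sub //; apply: supp_sub => j; rewrite Psi_sub.
case: (ltngtP r0 (tl n j)) => [h|h|h]; rewrite ?subrr ?eqxx //.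
rewrite sub0r oppr_eq0 => /psi_nz [_ [m [hm1 hm2 hm3]]].
apply: H => //; rewrite hm3 setLB ?hY0 //.
by rewrite hm1 -h leq_add2l.
Qed.

Definition Fcl n r0 c0 := forall j : 'I_#|cod_idx n|,
  #|tP n j :&: lo n (r0 + c0)| = r0 -> (r0 <= tl n j)%N ->
  ((delta_mx 0 j : 'rV[algC]_#|cod_idx n|) <= VV n r0 c0 (tP n j :&: lo n (r0 + c0)))%MS.

Lemma card_tP n j : #|tP n j| = n.
Proof. exact/eqP/(valP (enum_val j).1). Qed.

Lemma tl_lt n j : (tl n j < n)%N.
Proof. exact: ltn_ord. Qed.

Lemma tgt_eq n (j1 j2 : 'I_#|cod_idx n|) : tP n j1 = tP n j2 -> tl n j1 = tl n j2 -> j1 = j2.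
Proof.
move=> h1 h2; apply: enum_val_inj.
rewrite [enum_val j1]surjective_pairing [enum_val j2]surjective_pairing.
by congr pair; apply: val_inj.
Qed.

Lemma PsiE' n r0 i j : Psi n r0 i 0 j = if (r0 <= tl n j)%N then psi_mx n i j else 0.
Proof. by rewrite mxE. Qed.

Lemma step_notin n r0 c0 j : Fcl n r0 c0.+1 ->
  ~~ [exists x in tP n j, (x : nat) == (r0 + c0)%N] ->
  #|tP n j :&: lo n (r0 + c0)| = r0 -> (r0 <= tl n j)%N ->
  ((delta_mx 0 j : 'rV[algC]_#|cod_idx n|) <= VV n r0 c0 (tP n j :&: lo n (r0 + c0)))%MS.
Proof.
move=> IH hno hZ hl; have e := setL4 hno.
have := IH j; rewrite addnS e => /(_ hZ hl) h.
by apply: submx_trans h _; apply: VV_mono; apply: subsetIr.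
Qed.

Lemma step_in_row n r0 c0 j (x : 'I_(2 * n - 1)) : Fcl n r0 c0.+1 ->
  x \in tP n j -> (x : nat) = (r0 + c0)%N -> tl n j = r0 ->
  ((r0, c0) != (n.-1, 0%N)) ->
  #|tP n j :&: lo n (r0 + c0)| = r0 ->
  ((delta_mx 0 j : 'rV[algC]_#|cod_idx n|) <= VV n r0 c0 (tP n j :&: lo n (r0 + c0)))%MS.
Proof.
move=> IH xX hx hl hexc hZ.
set X := tP n j.
have hN := card_tP j; rewrite -/X in hN.
have ho : (r0 + c0 <= 2 * n - 1)%N by rewrite -hx ltnW.
have hc0 : (c0 < n)%N.
  have h1 := card_hi X ho; have h2 := cardsID (lo n (r0 + c0)) X.
  have h3 := tl_lt j; have h4 := ltn_ord x; rewrite hl in h3; rewrite hx in h4.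
  rewrite -/X in hZ; lia.
have hS : #|X :\ x| == n.-1.
  have := cardsD1 x X; rewrite xX hN add1n => e; by rewrite (congr1 predn e).
pose src : dom_idx n := (exist _ (X :\ x) hS, Ordinal hc0).
pose i := enum_rank src.
have hsS : sS n i = X :\ x by rewrite /sS /i enum_rankK.
have hsk : sk n i = c0 by rewrite /sk /i enum_rankK.
apply: (@pivot_sub _ _ _ (Psi n r0 i)).
- by apply: VV_gen; rewrite /srcOK hsS hsk leqnn andbT (setL3 _ hx).
- rewrite PsiE' hl leqnn psi_mxE /i enum_rankK /=.
  apply: (@psi_coef_neq0 _ _ _ _ _ x) => //.
  + by rewrite -/(tl n j) hl.
  + by rewrite setD11.
  + by rewrite -/(tl n j) hl hx.
  + by rewrite setD1K.
move=> j' hj'; rewrite PsiE'; case: ifP => hl'; last by rewrite eqxx.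
move=> /psi_nz [_ [m [hm1 hm2 hm3]]].
rewrite hsk hsS in hm1 hm2 hm3.
have hlt : (r0 < tl n j')%N.
  rewrite ltn_neqAle hl' andbT; apply/eqP => e.
  have emx : m = x by apply: val_inj; rewrite /= hm1 hx -e.
  by move/eqP: hj'; apply; apply: tgt_eq; rewrite ?hm3 ?emx ?setD1K // -e hl.
have hom : (r0 + c0 < m)%N by rewrite hm1 ltn_add2r.
have := IH j'; rewrite addnS hm3 (setL1 _ hx hom) => /(_ hZ hl') h.
by apply: submx_trans h _; apply: VV_mono; apply: subsetIr.
Qed.

Lemma row_case n r0 c0 (Z : {set 'I_(2 * n - 1)}) : Fcl n r0 c0.+1 -> #|Z| = r0 ->
  ((r0, c0) != (n.-1, 0%N)) ->
  forall j, tl n j = r0 -> tP n j :&: lo n (r0 + c0) = Z ->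
     ((delta_mx 0 j : 'rV[algC]_#|cod_idx n|) <= VV n r0 c0 Z)%MS.
Proof.
move=> IH hZ hexc j hl hj.
have hc : #|tP n j :&: lo n (r0 + c0)| = r0 by rewrite hj.
rewrite -hj.
case: (boolP [exists x in tP n j, (x : nat) == (r0 + c0)%N]) => [/existsP[x /andP[xX /eqP hx]]|hno].
  exact: (step_in_row IH xX hx).
by apply: step_notin => //; rewrite hl.
Qed.

Lemma Fc_step n r0 c0 : (0 < c0)%N -> Fcl n r0 c0.+1 -> Fcl n r0.+1 c0 -> Fcl n r0 c0.
Proof.
move=> c0pos IH1 IH2 j hZ hl.
case: (boolP [exists x in tP n j, (x : nat) == (r0 + c0)%N]) => [/existsP[x /andP[xX /eqP hx]]|hno];
  last exact: step_notin.
have hexc : (r0, c0) != (n.-1, 0%N).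
  by apply/negP => /eqP [_ e]; move: c0pos; rewrite e.
have row := row_case IH1 hZ hexc.
case: (ltngtP r0 (tl n j)) => [hlt|hgt|heq]; [|by rewrite ltnNge hl in hgt|by apply: row].
have hx' : x \notin tP n j :&: lo n (r0 + c0) by rewrite !inE hx ltnn andbF.
have := IH2 j; rewrite addSn (setL2 xX hx) cardsU1 hx' hZ => /(_ erefl hlt) h.
apply: submx_trans h _; apply: VV_down => //; exact: subsetIr.
Qed.

Lemma Fc_all n m : forall r0 c0, (0 < c0)%N -> (2 * n <= r0 + c0 + m)%N -> Fcl n r0 c0.
Proof.
elim: m => [|m IH] r0 c0 c0pos hm.
  move=> j hZ hl; exfalso.
  have e : tP n j :&: lo n (r0 + c0) = tP n j.
    apply/setIidPl/subsetP => y _; rewrite in_lo; apply: leq_trans (ltn_ord y) _.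
    by move: hm; rewrite addn0; lia.
  move: hZ; rewrite e card_tP => e2; have := tl_lt j; lia.
apply: Fc_step => //.
  by apply: IH => //; lia.
by apply: IH => //; lia.
Qed.

Definition Rcl n r0 := forall j : 'I_#|cod_idx n|,
  #|tP n j :&: lo n (r0 + 0)| = r0 -> (r0 <= tl n j)%N -> ~~ is_exceptional j ->
  ((delta_mx 0 j : 'rV[algC]_#|cod_idx n|) <= VV n r0 0 (tP n j :&: lo n (r0 + 0)))%MS.

Lemma is_excE n j : is_exceptional j = (tP n j == lo n n) && (tl n j == n.-1).
Proof. by rewrite /is_exceptional /tP /tl; case: (enum_val j). Qed.

Lemma R_step n r0 : Fcl n r0 1 -> Rcl n r0.+1 -> Rcl n r0.
Proof.
move=> IH1 IH2 j hZ hl hne.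
case: (boolP [exists x in tP n j, (x : nat) == (r0 + 0)%N]) => [/existsP[x /andP[xX /eqP hx]]|hno];
  last exact: step_notin.
case: (ltngtP r0 (tl n j)) => [hlt|hgt|heq]; first last.
- have hexc : (r0, 0%N) != (n.-1, 0%N).
    apply/negP => /eqP [e]; move/negP: hne; apply.
    rewrite is_excE -heq e eqxx andbT.
    have n0 : (0 < n)%N by have := tl_lt j; lia.
    have hlo : lo n (r0 + 0) \subset tP n j.
      have s1 : tP n j :&: lo n (r0 + 0) \subset lo n (r0 + 0) by apply: subsetIr.
      have c : (#|lo n (r0 + 0)| <= #|tP n j :&: lo n (r0 + 0)|)%N.
        by rewrite (@card_lo n (r0 + 0)) ?hZ ?addn0 //; lia.
      have : tP n j :&: lo n (r0 + 0) == lo n (r0 + 0).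
        by rewrite eqEcard s1 c.
      by move/eqP => <-; apply: subsetIl.
    rewrite eq_sym eqEcard card_tP (@card_lo n n) ?leqnn ?andbT; last by lia.
    apply/subsetP => y; rewrite in_lo => hy.
    case: (ltngtP y (r0 + 0)) => [h1|h1|h1].
    + by rewrite (subsetP hlo) // in_lo.
    + by move: hy h1; rewrite e addn0; lia.
    + by have -> : y = x by apply: val_inj; rewrite /= h1 hx.
  exact: (row_case IH1 hZ hexc).
- by rewrite ltnNge hl in hgt.
have hexc : (r0, 0%N) != (n.-1, 0%N).
  by apply/negP => /eqP [e]; have := tl_lt j; lia.
have row := row_case IH1 hZ hexc.
have hx' : x \notin tP n j :&: lo n (r0 + 0) by rewrite !inE hx ltnn andbF.
have := IH2 j; rewrite addSn (setL2 xX hx) cardsU1 hx' hZ => /(_ erefl hlt hne) h.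
apply: submx_trans h _; apply: VV_down => //; exact: subsetIr.
Qed.

Lemma R_all n m : forall r0, (n <= r0 + m)%N -> Rcl n r0.
Proof.
elim: m => [|m IH] r0 hm.
  by move=> j _ hl; have := tl_lt j; move: hm hl; rewrite addn0; lia.
apply: R_step; first by apply: (@Fc_all n (2 * n)) => //; lia.
by apply: IH; lia.
Qed.

Lemma nonexc_sub n j : ~~ is_exceptional j ->
  ((delta_mx 0 j : 'rV[algC]_#|cod_idx n|) <= psi_mx n)%MS.
Proof.
move=> hne.
have h0 : lo n (0 + 0) = set0 by apply/setP => y; rewrite in_lo ?in_set0 ?addn0 ?ltn0.
have := @R_all n n 0 (leqnn _) j; rewrite h0 setI0 cards0 => /(_ erefl (leq0n _) hne) h.
apply: submx_trans h _; apply/sumsmx_subP => i _; rewrite genmxE.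
have -> : Psi n 0 i = row i (psi_mx n) by apply/rowP => k; rewrite !mxE.
exact: row_sub.
Qed.

Lemma exc_col n i j : is_exceptional j -> psi_mx n i j = 0.
Proof.
rewrite is_excE => /andP[/eqP e1 /eqP e2]; apply/eqP; apply/negPn/negP.
move=> /psi_nz [h [m [hm1 hm2 hm3]]].
have : m \in tP n j by rewrite hm3 setU11.
rewrite e1 in_lo hm1 e2.
case: (eqVneq (sk n i) 0%N) => [e|ne]; first by move: h; rewrite e2 e eqxx.
have := tl_lt j; lia.
Qed.

Lemma psi_sub_span n : (psi_mx n <= span_nonexc n)%MS.
Proof.
apply/row_subP => i; apply: supp_sub => j; rewrite mxE => hne.
apply: (sumsmx_sup j); last by rewrite genmxE.
by apply/negP => /(exc_col i) e; rewrite e eqxx in hne.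
Qed.

Lemma span_sub_psi n : (span_nonexc n <= psi_mx n)%MS.
Proof. by apply/sumsmx_subP => j hne; rewrite genmxE; apply: nonexc_sub. Qed.

Lemma card_cod n : #|cod_idx n| = (n * 'C(2 * n - 1, n))%N.
Proof.
rewrite /cod_idx card_prod card_sig card_ord mulnC.
congr (_ * _)%N; rewrite -[in RHS](card_ord (2 * n - 1)) -card_draws.
by apply: eq_card => P; rewrite !inE.
Qed.

Lemma rank_span n : (1 <= n)%N -> \rank (span_nonexc n) = (#|cod_idx n| - 1)%N.
Proof.
move=> n1.
have hd : mxdirect (span_nonexc n).
  by apply: (@mxdirect_delta _ _ _ _ (fun j => j)) => a b _ _.
rewrite /span_nonexc; move/mxdirectP: hd => /= ->.
rewrite (eq_bigr (fun _ => 1%N)); last by move=> j _; rewrite genmxE mxrank_delta.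
rewrite sum1_card.
have hlo : #|lo n n| == n by rewrite (@card_lo n n) //; lia.
have hn1 : (n.-1 < n)%N by lia.
pose j0 := enum_rank ((exist _ (lo n n) hlo, Ordinal hn1) : cod_idx n).
have e : forall j, is_exceptional j = (j == j0).
  move=> j; rewrite is_excE.
  have t1 : tP n j0 = lo n n by rewrite /tP /j0 enum_rankK.
  have t2 : tl n j0 = n.-1 by rewrite /tl /j0 enum_rankK.
  apply/idP/eqP => [/andP[/eqP a /eqP b]|->]; last by rewrite t1 t2 !eqxx.
  by apply: tgt_eq; rewrite ?t1 ?t2.
have := cardC [pred j : 'I_#|cod_idx n| | is_exceptional j]; rewrite card_ord.
have -> : #|[pred j : 'I_#|cod_idx n| | is_exceptional j]| = 1%N.
  by rewrite -(card1 j0); apply: eq_card => j; rewrite inE e.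
move=> hc.
have aux : forall a b : nat, (1 + a = b -> a = b - 1)%N by move=> a b <-; rewrite addKn.
transitivity #|[predC [pred j : 'I_#|cod_idx n| | is_exceptional j]]|; last exact: aux hc.
by apply: eq_card => j; rewrite !inE.
Qed.

Theorem mainTheorem11 (n : nat) (hn : (2 <= n)%N) :
  \rank (psi_mx n) = (n * 'C(2 * n - 1, n) - 1)%N /\
  (psi_mx n == span_nonexc n)%MS.
Proof.
have e : (psi_mx n == span_nonexc n)%MS by rewrite psi_sub_span span_sub_psi.
split => //.
by rewrite (eqmx_rank e) rank_span ?card_cod //; lia.
Qed.
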